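(* Let $G$ be a connected split graph with at least two vertices. A vertex $v\in V(G)$ is an $\mathcal{F}$-branch leaf of some DFS ordering of $G$ if and only if $v$ is not a cut vertex of $G$.
   Context: Graphs are finite, simple, undirected. A split graph is a graph whose vertex set can be partitioned into a clique and an independent set. A vertex ordering of $G$ is a bijection $\sigma:\{1,\dots,n\}\to V(G)$; $u\prec_\sigma w$ means $u$ comes before $w$. DFS orderings are produced by the label search: initially all labels are $\emptyset$; for $i=1,\dots,n$ choose any unnumbered vertex $x$ such that there is no unnumbered $y$ with $\mathrm{label}(x)\prec\mathrm{label}(y)$, set $\sigma(i)=x$, and add $i$ to the labels of the unnumbered neighbors of $x$, where $A\prec B$ iff ($A=\emptyset$ and $B\neq\emptyset$) or $\max(A)<\max(B)$. The $\mathcal{F}$-tree of $\sigma$ is the spanning tree containing, for each $v\neq\sigma(1)$, the edge from $v$ to its leftmost neighbor in $\sigma$. A vertex $v\neq\sigma(1)$ that is a leaf of the $\mathcal{F}$-tree is an $\mathcal{F}$-branch leaf of $\sigma$. *)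

(* Defs.v *)
From mathcomp Require Import all_boot.
Set Implicit Arguments. Unset Strict Implicit. Unset Printing Implicit Defensive.

Definition simple_graph (T : finType) (e : rel T) : Prop :=
  symmetric e /\ irreflexive e.

Definition graph_connected (T : finType) (e : rel T) : Prop :=
  forall x y : T, connect e x y.

Definition del_vertex (T : finType) (e : rel T) (v : T) : rel T :=
  [rel a b | [&& e a b, a != v & b != v]].

(* v is a cut vertex: its removal increases the number of components, i.e.
   two vertices other than v, connected in G, are disconnected in G - v. *)
Definition cut_vertex (T : finType) (e : rel T) (v : T) : Prop :=
  exists x y : T, [/\ x != v, y != v, connect e x y &
                      ~~ connect (del_vertex e v) x y].

Definition is_clique (T : finType) (e : rel T) (K : {set T}) : Prop :=
  forall x y, x \in K -> y \in K -> x != y -> e x y.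

Definition is_independent (T : finType) (e : rel T) (I : {set T}) : Prop :=
  forall x y, x \in I -> y \in I -> ~~ e x y.

Definition split_graph (T : finType) (e : rel T) : Prop :=
  exists K : {set T}, is_clique e K /\ is_independent e (~: K).

(* A vertex ordering sigma is represented by the sequence
   [:: sigma(1); ...; sigma(n)]: a duplicate-free enumeration of all vertices.
   Position p (0-based) in the sequence corresponds to number p.+1. *)
Definition vertex_ordering (T : finType) (s : seq T) : Prop :=
  uniq s /\ forall v : T, v \in s.

(* label of x just before step i.+1 (i.e. after sigma(1..i) were numbered):
   the numbers j.+1, j < i, such that sigma(j.+1) is adjacent to x. *)
Definition dfs_label (T : finType) (e : rel T) (s : seq T) (i : nat) (x : T)
  : seq nat :=
  [seq j.+1 | j <- iota 0 i & e (nth x s j) x].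

Definition seq_max (A : seq nat) : nat := foldr maxn 0 A.

Definition label_prec (A B : seq nat) : bool :=
  ((A == [::]) && (B != [::])) ||
  [&& A != [::], B != [::] & seq_max A < seq_max B].

(* sigma is a DFS ordering: produced by the label search, i.e. at each step
   i.+1 the chosen vertex sigma(i.+1) has no unnumbered y with a larger label. *)
Definition is_DFS_ordering (T : finType) (e : rel T) (s : seq T) : Prop :=
  vertex_ordering s /\
  forall (i : nat) (y : T), i < size s -> y \in drop i s ->
    ~~ label_prec (dfs_label e s i (nth y s i)) (dfs_label e s i y).

Definition F_parent (T : finType) (e : rel T) (s : seq T) (u : T) : T :=
  nth u s (find (e u) s).

Definition F_tree_adj (T : finType) (e : rel T) (s : seq T) (u w : T) : bool :=
  ((u != head u s) && (F_parent e s u == w)) ||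
  ((w != head w s) && (F_parent e s w == u)).

Definition F_branch_leaf (T : finType) (e : rel T) (s : seq T) (v : T) : Prop :=
  v != head v s /\ #|[set w | F_tree_adj e s v w]| = 1.

(* Main.v *)
Require Import Defs.
From mathcomp Require Import all_boot zify.

Section Aux.
Variables (T : finType) (e : rel T).

Lemma seq_max_le s n : (seq_max s <= n) = all (fun x => x <= n) s.
Proof. by elim: s => //= a s IH; rewrite geq_max IH. Qed.

Lemma seq_max_ge s x : x \in s -> x <= seq_max s.
Proof.
elim: s => //= a s IH; rewrite in_cons => /orP [/eqP ->|/IH h].
  exact: leq_maxl.
exact: leq_trans h (leq_maxr _ _).
Qed.

Lemma lab_le s i x : seq_max (dfs_label e s i x) <= i.
Proof.
rewrite seq_max_le; apply/allP => b /mapP [j].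
by rewrite mem_filter mem_iota add0n => /andP [_ /andP [_ hj]] ->.
Qed.

Lemma lab_mem s i x j : j < i -> e (nth x s j) x -> j.+1 \in dfs_label e s i x.
Proof.
move=> hj he; apply/mapP; exists j => //.
by rewrite mem_filter mem_iota add0n hj he.
Qed.

Lemma lab_pos s i x b : b \in dfs_label e s i x -> 0 < b.
Proof. by case/mapP => j _ ->. Qed.

Lemma lab_ne s i x : dfs_label e s i x != [::] ->
  exists j, j < i /\ e (nth x s j) x.
Proof.
case H: (dfs_label e s i x) => [|a l] // _.
have: a \in dfs_label e s i x by rewrite H mem_head.
case/mapP => j; rewrite mem_filter mem_iota add0n => /andP [he /andP [_ hj]] _.
by exists j.
Qed.

Lemma lab_cat p q i x : i <= size p ->
  dfs_label e (p ++ q) i x = dfs_label e p i x.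
Proof.
move=> hi; rewrite /dfs_label; congr map; apply: eq_in_filter => j.
rewrite mem_iota add0n => /andP [_ hj].
by rewrite nth_cat (leq_trans hj hi).
Qed.

Lemma label_prec_lt A B : label_prec A B -> (forall b, b \in B -> 0 < b) ->
  seq_max A < seq_max B.
Proof.
rewrite /label_prec => /orP [/andP [/eqP -> hB] hpos | /and3P [_ _ //]].
case: B hB hpos => [//|b B] _ hpos /=.
exact: leq_trans (hpos b (mem_head _ _)) (leq_maxl _ _).
Qed.

Definition valid (p : seq T) := uniq p /\ forall (i : nat) (y : T), i < size p ->
  y \notin take i p ->
  seq_max (dfs_label e p i y) <= seq_max (dfs_label e p i (nth y p i)).

Lemma notin_take (s : seq T) (i : nat) (y : T) : uniq s -> y \in drop i s -> y \notin take i s.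
Proof.
rewrite -{1}(cat_take_drop i s) cat_uniq => /and3P [_ /hasPn H _] hy.
exact: H.
Qed.

Arguments notin_take [s i y].

Lemma valid_DFS s : valid s -> (forall v, v \in s) -> is_DFS_ordering e s.
Proof.
move=> [hu hv] hall; split; first by split.
move=> i y hi hy; apply/negP => /label_prec_lt h.
have := hv i y hi (notin_take hu hy).
by rewrite leqNgt (h (@lab_pos _ _ _)).
Qed.

Lemma valid_rcons p y0 : valid p -> y0 \notin p ->
  (forall y, y \notin p -> seq_max (dfs_label e p (size p) y)
                          <= seq_max (dfs_label e p (size p) y0)) ->
  valid (rcons p y0).
Proof.
move=> [hu hv] hy0 hmax; rewrite -cats1; split.
  by rewrite cats1 rcons_uniq hy0 hu.
move=> i y; rewrite size_cat /= addn1 ltnS leq_eqVlt => /orP [/eqP -> | hi].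
  rewrite take_size_cat // nth_cat ltnn subnn /= !lab_cat //.
  exact: hmax.
rewrite take_cat hi nth_cat hi !lab_cat ?(ltnW hi) //.
exact: hv.
Qed.

Lemma extend n p : #|T| - size p <= n -> valid p ->
  exists q, is_DFS_ordering e (p ++ q).
Proof.
elim: n p => [|n IH] p hn hv; case: (boolP [forall v, v \in p]) => hall.
- exists [::]; rewrite cats0; apply: valid_DFS => // v; exact: (forallP hall v).
- move/forallPn: hall => [y1 hy1].
  have: #|p| < #|T|.
    rewrite -(cardC (mem p)) -addn1 leq_add2l; apply/card_gt0P; exists y1; by rewrite inE.
  move: hv => [hu _]; rewrite (card_uniqP hu); lia.
- exists [::]; rewrite cats0; apply: valid_DFS => // v; exact: (forallP hall v).
- move/forallPn: hall => [y1 hy1].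
  case: (@arg_maxnP _ y1 [pred y | y \notin p]
           (fun y => seq_max (dfs_label e p (size p) y)) hy1) => y0 hy0 hmax.
  have hv' := @valid_rcons p y0 hv hy0 hmax.
  have [q hq] := IH (rcons p y0) ltac:(rewrite size_rcons; lia) hv'.
  by exists (y0 :: q); rewrite -cat_rcons.
Qed.

Lemma clique_valid p : uniq p ->
  (forall a b, a \in p -> b \in p -> a != b -> e a b) -> valid p.
Proof.
move=> hu hc; split => // i y hi _.
apply: leq_trans (lab_le _ _ _) _.
case: i hi => [|i] hi //.
apply: seq_max_ge; apply: lab_mem => //.
rewrite (@set_nth_default _ p y (nth y p i.+1) i) ?(ltnW hi) //.
apply: hc; rewrite ?mem_nth ?(ltnW hi) //.
rewrite nth_uniq ?(ltnW hi) //. lia.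
Qed.



End Aux.
Set Implicit Arguments.

Section Aux2.
Variables (T : finType) (e : rel T).
Hypothesis esym : symmetric e.
Hypothesis eirr : irreflexive e.

Lemma leaf_ok (P q : seq T) v nb :
  uniq (P ++ q) -> (forall x, x \in P ++ q) -> P != [::] -> v \notin P ->
  e v nb ->
  (forall w, e v w -> w != head w (P ++ q) -> exists2 k, k \in P & e w k) ->
  F_branch_leaf e (P ++ q) v.
Proof.
case: P => [//|a P'] hu hall _ hv hnb hw.
set S := (a :: P') ++ q.
have hva : v != a by apply: contraNneq hv => ->; exact: mem_head.
have key : forall w, w != a -> F_parent e S w != v.
  move=> w hwa; apply/eqP => hpw.
  case: (boolP (has (e w) S)) => hh.
    have hew := nth_find w hh; rewrite /F_parent in hpw; rewrite hpw in hew.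
    have [k hk hek] : exists2 k, k \in a :: P' & e w k.
      by apply: hw => //; rewrite esym.
    have hkS : k \in S by rewrite mem_cat hk.
    have hki : index k S < size (a :: P').
      by rewrite /S index_cat hk index_mem.
    have hf : find (e w) S <= index k S.
      rewrite leqNgt; apply/negP => lt; have := before_find k lt.
      by rewrite nth_index // hek.
    have hvi : index v S = find (e w) S.
      by rewrite -hpw index_uniq // -has_find.
    move: hvi; rewrite /S index_cat (negbTE hv) => hvi.
    move: hf hki; rewrite -/S -hvi => h1 h2.
    by have := leq_ltn_trans (leq_trans (leq_addr _ _) h1) h2; rewrite ltnn.
  move: hpw; rewrite /F_parent (hasNfind hh) nth_default // => hwv.
  move: hh; rewrite hwv => /hasP []; exists nb => //.
split => //.
have -> : [set w | F_tree_adj e S v w] = [set F_parent e S v].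
  apply/setP => w; rewrite !inE /F_tree_adj /= hva /=.
  case: (boolP (w != a)) => hwa /=; rewrite ?(negbTE (key w hwa)) ?andbF ?orbF;
    by rewrite eq_sym.
by rewrite cards1.
Qed.

Lemma cross (r : rel T) (A : pred T) x p : path r x p -> x \in A ->
  last x p \notin A -> exists a b, [/\ a \in A, b \notin A & r a b].
Proof.
elim: p x => [|b p IH] x /=; first by move=> _ h1 h2; rewrite h1 in h2.
move=> /andP [hxb hp] hx hl.
case: (boolP (b \in A)) => hb; first exact: (IH b hp hb hl).
by exists x, b.
Qed.

Lemma idx_take (s : seq T) i x : x \in take i s -> index x s < i.
Proof.
move=> hx; rewrite -{1}(cat_take_drop i s) index_cat hx.
have := index_mem x (take i s); rewrite hx size_take => h.
case: ifP h => hh h; first lia. move/negbT: hh; lia.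
Qed.

Lemma earlier (s : seq T) x : is_DFS_ordering e s -> graph_connected e ->
  x != head x s -> exists j, j < index x s /\ e (nth x s j) x.
Proof.
move=> [[hu hall] hdfs] hcon hx.
set i := index x s.
have hxs := hall x.
have hi : i < size s by rewrite index_mem.
have hnx : nth x s i = x by rewrite nth_index.
case: s hu hall hdfs hx @i hxs hi hnx => [|a s'] hu hall hdfs hx i hxs hi hnx //.
have i0 : 0 < i.
  case: (posnP i) => // h; move: hnx; rewrite h /= => hax; by rewrite hax eqxx in hx.
case: (boolP (dfs_label e (a :: s') i x != [::])) => hl.
  exact: lab_ne.
exfalso; move: hl; rewrite negbK => /eqP hl.
have ha : a \in take i (a :: s') by case: (i) i0 => // i' _; rewrite /= mem_head.
have hxn : x \notin take i (a :: s').
  by apply/negP => /idx_take; rewrite ltnn.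
have /connectP [p hp hlast] := hcon a x.
have hl' : last a p \notin [pred t | t \in take i (a :: s')] by rewrite -hlast.
have [a' [b [ha' hb hab]]] := @cross e [pred t | t \in take i (a :: s')] a p hp ha hl'.
rewrite /= in ha' hb.
have hbd : b \in drop i (a :: s').
  by move: (hall b); rewrite -{1}(cat_take_drop i (a :: s')) mem_cat (negbTE hb).
have := hdfs i b hi hbd.
rewrite (set_nth_default x) // hnx hl /label_prec /= orbF negbK => /eqP hnil.
have ha'i := @idx_take (a :: s') i a' ha'.
have hm := @lab_mem _ e (a :: s') i b _ ha'i.
rewrite nth_index in hm; last by apply: mem_take ha'.
by move: (hm hab); rewrite hnil in_nil.
Qed.

End Aux2.
Unset Implicit Arguments.

Lemma noedge (T : finType) (r : rel T) x y :
  (forall b, ~~ r x b) -> x != y -> ~~ connect r x y.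
Proof.
move=> h hxy; apply/negP => /connectP [[|b p] /= hp hl].
  by rewrite hl eqxx in hxy.
by move: hp => /andP [hb _]; move: (h b); rewrite hb.
Qed.

Lemma head_in (T : eqType) (P q : seq T) w : P != [::] -> head w (P ++ q) \in P.
Proof. by case: P => //= a P _; rewrite mem_head. Qed.

Theorem theorem14 (T : finType) (e : rel T) :
  simple_graph e -> graph_connected e -> split_graph e -> 2 <= #|T| ->
  forall v : T,
    (exists s : seq T, is_DFS_ordering e s /\ F_branch_leaf e s v) <->
    ~ cut_vertex e v.
Proof.
move=> [esym eirr] hcon [K [hK hI]] hT v; split.
- move=> [s [hdfs [hvh hcard]]] [x [y [hxv hyv _ hnc]]].
  have hdfs' := hdfs; move: hdfs' => [[hu hall] _].
  case: s hdfs hvh hcard hu hall => [|a s'] hdfs hvh hcard hu hall.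
    by have := hall v.
  set s := a :: s' in hdfs hvh hcard hu hall *.
  set r := del_vertex e v.
  have rsym : symmetric r.
    by move=> b c; rewrite /r /del_vertex /= esym; congr (_ && _); rewrite andbC.
  have csym := sym_connect_sym rsym.
  have [z [hzv hz]] : exists z, z != v /\ ~~ connect r a z.
    case: (boolP (connect r a x)) => hx; last by exists x.
    case: (boolP (connect r a y)) => hy; last by exists y.
    by move: hnc; rewrite (connect_trans _ hy) // csym.
  pose C := [pred t | (t != v) && connect r z t].
  have hhas : has C s by apply/hasP; exists z => //; rewrite /= hzv connect0.
  set w := nth v s (find C s).
  have hwC : C w := nth_find v hhas.
  have hfs : find C s < size s by rewrite -has_find.
  have hwi : index w s = find C s by rewrite index_uniq.
  have hwa : w != head w s.
    apply/negP => /eqP hwa; move: hwC; rewrite /= hwa /= => /andP [_ hza].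
    by move: hz; rewrite csym hza.
  have hCt : forall t, C t = false -> e w t -> t = v.
    move=> t hCt hwt; apply/eqP; apply: contraT => htv.
    move: hCt; rewrite /= htv /=; move: hwC => /andP [hwv hzw].
    by rewrite (connect_trans hzw) // connect1 // /r /del_vertex /= hwt hwv htv.
  have [j [hj hjw]] := @earlier _ _ _ _ hdfs hcon hwa.
  have hjv : nth w s j = v.
    apply: hCt; last by rewrite esym.
    by apply: before_find; rewrite -hwi.
  have hjs : j < size s by apply: leq_trans hj _; rewrite ltnW // hwi.
  have hvi : index v s = j by rewrite -hjv index_uniq.
  have hhw : has (e w) s by apply/hasP; exists v => //; rewrite -hjv esym.
  have hfw : find (e w) s <= j.
    rewrite leqNgt; apply/negP => lt; have := before_find w lt.
    by rewrite hjv -hjv esym hjw.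
  have hpw : F_parent e s w = v.
    apply: hCt; last exact: nth_find.
    by apply: before_find; rewrite -hwi; apply: leq_ltn_trans hfw hj.
  have hva : v != head v s by [].
  have [j' [hj' hj'v]] := @earlier _ _ _ _ hdfs hcon hva.
  have hj's : j' < size s by apply: leq_trans hj' _; rewrite ltnW // index_mem.
  have hhv : has (e v) s by apply/hasP; exists (nth v s j'); [exact: mem_nth | rewrite esym].
  have hfv : find (e v) s <= j'.
    rewrite leqNgt; apply/negP => lt; have := before_find v lt.
    by rewrite esym hj'v.
  have hpv : F_parent e s v != w.
    apply/negP => /eqP hpv.
    have : index (F_parent e s v) s = find (e v) s.
      by rewrite /F_parent index_uniq // -has_find.
    rewrite hpv hwi => hh.
    have : find C s < index w s by rewrite hh; apply: leq_ltn_trans hfv (leq_trans hj' _); rewrite hvi ltnW // hwi.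
    by rewrite hwi ltnn.
  have hsub : [set F_parent e s v; w] \subset [set w0 | F_tree_adj e s v w0].
    apply/subsetP => t; rewrite !inE => /orP [] /eqP ->; rewrite /F_tree_adj.
      by rewrite hvh eqxx.
    by rewrite hwa hpw eqxx orbT.
  have := subset_leq_card hsub; rewrite hcard cards2 hpv; done.
- move=> hnc.
  have [u hu] : exists u, u != v.
    case: (pickP (fun u => u != v)) => [u hu | h]; first by exists u.
    have hs : predT \subset pred1 v.
      by apply/subsetP => t _; rewrite inE; move: (h t) => /= /negbFE.
    by move: (subset_leq_card hs); rewrite card1; move: hT; rewrite /= => /leq_trans h1 /h1.
  have [nb hnb] : exists nb, e v nb.
    have /connectP [[|b p] /= hp hl] := hcon v u.
      by rewrite hl eqxx in hu.
    by move: hp => /andP [hb _]; exists b.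
  have hwv : forall w, e v w -> w != v.
    by move=> w hvw; apply: contraTneq hvw => ->; rewrite eirr.
  have hInd : forall a b, a \notin K -> b \notin K -> ~~ e a b.
    by move=> a b ha hb; apply: hI; rewrite in_setC.
  case: (boolP (v \in K)) => hvK.
  + case: (boolP [exists k, (k \in K) && (k != v)]).
    * move/existsP => [k0 /andP [hk0 hk0v]].
      set P := enum (K :\ v).
      have hPv : @valid _ e P.
        apply: clique_valid; first exact: enum_uniq.
        by move=> a b; rewrite !mem_enum !inE => /andP [_ ha] /andP [_ hb]; apply: hK.
      have [q hq] := @extend _ e _ _ (leq_subr (size P) #|T|) hPv.
      exists (P ++ q); split => //.
      have hP0 : P != [::].
        apply/eqP => hP; have : k0 \in P by rewrite /P mem_enum !inE hk0 hk0v.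
        by rewrite hP.
      move: hq => [[hu' hall'] _].
      apply: (@leaf_ok _ e esym _ _ _ _ hu' hall' hP0 _ hnb).
        by rewrite mem_enum !inE eqxx.
      move=> w hvw hwh.
      have hh := @head_in _ _ q w hP0.
      have hhK : head w (P ++ q) \in K by move: hh; rewrite mem_enum !inE => /andP [].
      case: (boolP (w \in K)) => hwK.
        by exists (head w (P ++ q)) => //; apply: hK.
      case: (boolP [exists k, (k \in K :\ v) && e w k]).
        by move/existsP => [k /andP [hk hwk]]; exists k => //; rewrite mem_enum.
      move=> hne; exfalso; apply: hnc; exists w, k0; split => //.
      - exact: hwv.
      - apply: noedge; last by apply: contraNneq hwK => ->.
        move=> b; rewrite /del_vertex /=; apply/negP => /and3P [hwb _ hbv].
        case: (boolP (b \in K)) => hbK; last by move: (hInd w b hwK hbK); rewrite hwb.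
        by move: hne; rewrite negb_exists => /forallP /(_ b); rewrite !inE hbK hbv hwb.
    * rewrite negb_exists => /forallP hall0.
      have hKv : forall k, k \in K -> k = v.
        by move=> k hk; move: (hall0 k); rewrite hk /= negbK => /eqP.
      have hPv : @valid _ e [:: u] by apply: clique_valid => // a b; rewrite !inE => /eqP -> /eqP ->; rewrite eqxx.
      have [q hq] := @extend _ e _ _ (leq_subr (size [:: u]) #|T|) hPv.
      exists ([:: u] ++ q); split => //.
      move: hq => [[hu' hall'] _].
      apply: (@leaf_ok _ e esym _ _ _ _ hu' hall' _ _ hnb) => //.
        by rewrite inE eq_sym.
      move=> w hvw hwh; exfalso; apply: hnc; exists u, w; split => //.
      - exact: hwv.
      - apply: noedge; last by rewrite eq_sym.
        move=> b; rewrite /del_vertex /=; apply/negP => /and3P [hub hu2 hbv].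
        have huK : u \notin K by apply: contraNN hu2 => /hKv ->.
        have hbK : b \notin K by apply: contraNN hbv => /hKv ->.
        by move: (hInd u b huK hbK); rewrite hub.
  + have hnbK : nb \in K by apply: contraT => hnbK; move: (hInd v nb hvK hnbK); rewrite hnb.
    set P := enum K.
    have hPv : @valid _ e P.
      apply: clique_valid; first exact: enum_uniq.
      by move=> a b; rewrite !mem_enum; apply: hK.
    have [q hq] := @extend _ e _ _ (leq_subr (size P) #|T|) hPv.
    exists (P ++ q); split => //.
    have hP0 : P != [::].
      apply/eqP => hP; have : nb \in P by rewrite /P mem_enum.
      by rewrite hP.
    move: hq => [[hu' hall'] _].
    apply: (@leaf_ok _ e esym _ _ _ _ hu' hall' hP0 _ hnb); first by rewrite mem_enum.
    move=> w hvw hwh.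
    have hh := @head_in _ _ q w hP0.
    have hwK : w \in K by apply: contraT => hwK; move: (hInd v w hvK hwK); rewrite hvw.
    by exists (head w (P ++ q)) => //; apply: hK => //; rewrite -mem_enum.
Qed.
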